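(* For $n\ge 3$ and every $i\in\{1,\dots,n\}$, $P_n(x_1,\dots,x_{i-1},1,x_{i+1},\dots,x_n)=C_{n-1}(x_1,\dots,x_{i-1},x_{i+1},\dots,x_n)=P_{n-1}(x_1,\dots,x_{i-1},x_{i+1},\dots,x_n)^2$.
   Context: Let $x_1,\dots,x_n$ be algebraically independent indeterminates over $\mathbb{Q}$; in an algebraic closure fix $y_j$ with $y_j^2=1-x_j^2$. For indices $i_1<\dots<i_m$, $\mathrm{EC}_m(x_{i_1},\dots,x_{i_m})=\sum_{S\subseteq\{i_1,\dots,i_m\},\ |S|\text{ even}}(-1)^{|S|/2}\prod_{j\in S}y_j\prod_{j\notin S}x_j$. For $k\ge 1$, $C_k(x_1,\dots,x_k)=\prod_{\sigma\in G_k}(\sigma(\mathrm{EC}_k(x_1,\dots,x_k))-1)$, where $G_k$ is the Galois group of $\mathbb{Q}(x_1,\dots,x_k,\ y_iy_j:1\le i<j\le k)$ over $\mathbb{Q}(x_1,\dots,x_k)$. $P_1=x_1-1$ and for $k\ge 2$, $P_k(x_1,\dots,x_k)=\prod_{\sigma\in G_{k-1}}(x_k-\sigma(\mathrm{EC}_{k-1}(x_1,\dots,x_{k-1})))$; these are polynomials with rational coefficients, and by the same formulas they are evaluated at any list of variables (renaming $x_j,y_j$ accordingly). *)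

(* Defs.v *)
(* Variables x_1..x_n are 0-indexed as x 0 .. x (n-1),
   points are functions nat -> algC (only the first k values matter). *)
From HB Require Import structures.
From mathcomp Require Import all_boot all_order all_algebra all_field.
Set Implicit Arguments. Unset Strict Implicit. Unset Printing Implicit Defensive.
Import Order.TTheory GRing.Theory Num.Theory.
Local Open Scope ring_scope.

(* EC_m(x_0,...,x_{m-1}) evaluated at a point (x,y) with y_j^2 = 1 - x_j^2. *)
Definition EC (m : nat) (x y : nat -> algC) : algC :=
  \sum_(T : {set 'I_m} | ~~ odd #|T|)
     (-1) ^+ (#|T| %/ 2) * (\prod_(j in T) y j) * \prod_(j in ~: T) x j.

(* The Galois group G_m acts by y_j |-> -y_j for j in a set S, with S and its
   complement giving the same automorphism.  [flip S y] applies the sign change. *)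
Definition flip (m : nat) (S : {set 'I_m}) (y : nat -> algC) : nat -> algC :=
  fun j => if j \in [seq val i | i in S] then - y j else y j.

(* Representatives of G_m: sign-change sets not containing index 0
   (for m = 0 only the empty set, i.e. the trivial group). *)
Definition Grep (m : nat) (S : {set 'I_m}) : bool := [forall j in S, val j != 0%N].

Definition C (k : nat) (x y : nat -> algC) : algC :=
  \prod_(S : {set 'I_k} | Grep S) (EC k x (flip S y) - 1).

(* P_k evaluated at (x,y); x k.-1 is the last variable x_k. *)
Definition P (k : nat) (x y : nat -> algC) : algC :=
  if k is 1 then x 0%N - 1 else
  \prod_(S : {set 'I_k.-1} | Grep S) (x k.-1 - EC k.-1 x (flip S y)).

Definition set_at (i : nat) (v : algC) (x : nat -> algC) : nat -> algC :=
  fun j => if j == i then v else x j.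

Definition del (i : nat) (x : nat -> algC) : nat -> algC :=
  fun j => if (j < i)%N then x j else x j.+1.

(* Main.v *)
Require Import Defs.
From HB Require Import structures.
From mathcomp Require Import all_boot all_order all_algebra all_field.
From mathcomp Require Import ring.
From Stdlib Require Import FunctionalExtensionality.
Import Order.TTheory GRing.Theory Num.Theory.
Local Open Scope ring_scope.
Definition Zp (m : nat) (x y : nat -> algC) : algC := \prod_(j < m) (x j + 'i * y j).
Definition negf (y : nat -> algC) : nat -> algC := fun j => - y j.

Lemma Zp_expand m x y : Zp m x y =
  \sum_(T : {set 'I_m}) 'i ^+ #|T| * (\prod_(j in T) y j) * \prod_(j in ~: T) x j.
Proof.
rewrite /Zp (eq_bigr (fun j : 'I_m => 'i * y j + x j)); last by move=> j _; rewrite addrC.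
rewrite bigA_distr; apply: eq_bigr => T _.
rewrite (bigID (fun j => j \in T)) /=.
rewrite (eq_bigr (fun j : 'I_m => 'i * y j)); last by move=> j ->.
rewrite (eq_bigr (fun j : 'I_m => x j) (P := fun j => j \notin T)); last by move=> j /negbTE ->.
rewrite big_split /= prodr_const; congr (_ * _).
by apply: eq_bigl => j; rewrite in_setC.
Qed.

Lemma EC_Zp m x y : EC m x y = (Zp m x y + Zp m x (negf y)) / 2.
Proof.
rewrite !Zp_expand -big_split /= /EC.
rewrite [X in _ = X / 2](bigID (fun T : {set 'I_m} => odd #|T|)) /=.
rewrite [X in _ = (X + _) / 2]big1 ?add0r; last first.
  move=> T oT.
  have -> : \prod_(j in T) negf y j = (-1) ^+ #|T| * \prod_(j in T) y j.
    exact: prodrN.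
  rewrite -signr_odd oT expr1.
by rewrite mulN1r mulrN mulNr addrN.
rewrite mulr_suml; apply: eq_bigr => T eT.
have -> : \prod_(j in T) negf y j = (-1) ^+ #|T| * \prod_(j in T) y j.
  exact: prodrN.
rewrite -[(-1) ^+ #|T|]signr_odd (negbTE eT) expr0 mul1r.
have -> : 'i ^+ #|T| = (-1) ^+ (#|T| %/ 2) :> algC.
  by rewrite -{1}(divnK (m := #|T|) (d := 2)) ?dvdn2 // mulnC exprM sqrCi.
set a := _ * _ * _; by field.
Qed.
Lemma Grep_lift m (i0 : 'I_m.+1) (S : {set 'I_m}) : val i0 != 0%N ->
  Grep (lift i0 @: S) = Grep S.
Proof.
move=> i0n0; apply/forall_inP/forall_inP => H j.
- move=> jS; apply: contraNneq (H _ (imset_f (lift i0) jS)) => j0.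
  by rewrite /= /bump j0 addn0 leqn0 (negbTE i0n0).
- move=> /imsetP [k kS ->]; have := H _ kS; rewrite /= /bump.
  by case: (nat_of_ord k) => // k'; rewrite addnS.
Qed.

Lemma Grep_lift1 m (i0 : 'I_m.+1) (S : {set 'I_m}) : val i0 != 0%N ->
  Grep (i0 |: lift i0 @: S) = Grep S.
Proof.
move=> i0n0; rewrite -(@Grep_lift m i0 S i0n0).
apply/forall_inP/forall_inP => H j jS.
- by apply: H; rewrite in_setU1 jS orbT.
- by move: jS; rewrite in_setU1 => /orP[/eqP -> //|]; apply: H.
Qed.

Lemma Grep0 m (S : {set 'I_m.+1}) : Grep S = (ord0 \notin S).
Proof.
apply/forall_inP/idP => [H | H j jS].
- by apply/negP => /H.
- apply/negP => /eqP j0; move/negP: H; apply; suff -> : ord0 = j by [].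
  by apply: val_inj.
Qed.

Definition unl m (i0 : 'I_m.+1) (S : {set 'I_m.+1}) : {set 'I_m} :=
  [set j | lift i0 j \in S].
Arguments unl {m}.

Lemma unl_lift m (i0 : 'I_m.+1) (S : {set 'I_m}) : unl i0 (lift i0 @: S) = S.
Proof. by apply/setP => j; rewrite inE mem_imset //; exact: lift_inj. Qed.

Lemma unl_lift1 m (i0 : 'I_m.+1) (S : {set 'I_m}) : unl i0 (i0 |: lift i0 @: S) = S.
Proof.
apply/setP => j; rewrite inE in_setU1 mem_imset; last exact: lift_inj.
by rewrite eq_sym (negbTE (neq_lift _ _)).
Qed.

Lemma lift_unl m (i0 : 'I_m.+1) (S : {set 'I_m.+1}) : i0 \notin S ->
  lift i0 @: unl i0 S = S.
Proof.
move=> nS; apply/setP => k; case: (unliftP i0 k) => [j ->|->].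
  by rewrite mem_imset ?inE //; exact: lift_inj.
rewrite (negbTE nS); apply/imsetP => -[j _ /eqP]; apply/negP; exact: neq_lift.
Qed.

Lemma lift_unl1 m (i0 : 'I_m.+1) (S : {set 'I_m.+1}) : i0 \in S ->
  i0 |: lift i0 @: unl i0 S = S.
Proof.
move=> iS; apply/setP => k; rewrite in_setU1; case: (unliftP i0 k) => [j ->|->].
  by rewrite eq_sym (negbTE (neq_lift _ _)) mem_imset ?inE //; exact: lift_inj.
by rewrite eqxx iS.
Qed.

Lemma split_at m (i0 : 'I_m.+1) (F : {set 'I_m.+1} -> algC) : val i0 != 0%N ->
  \prod_(S : {set 'I_m.+1} | Grep S) F S =
  \prod_(S : {set 'I_m} | Grep S) (F (lift i0 @: S) * F (i0 |: lift i0 @: S)).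
Proof.
move=> i0n0; rewrite big_split /= [LHS](bigID (fun S : {set 'I_m.+1} => i0 \in S)) /= mulrC.
congr (_ * _).
- rewrite (reindex_onto (fun S : {set 'I_m} => lift i0 @: S) (unl i0)); last first.
    by move=> S /andP[_ nS]; rewrite lift_unl.
  apply: eq_bigl => S; rewrite Grep_lift // unl_lift eqxx andbT.
  case: (Grep S) => //=; apply/imsetP => -[j _ /eqP]; apply/negP; exact: neq_lift.
- rewrite (reindex_onto (fun S : {set 'I_m} => i0 |: lift i0 @: S) (unl i0)); last first.
    by move=> S /andP[_ nS]; rewrite lift_unl1.
  by apply: eq_bigl => S; rewrite Grep_lift1 // unl_lift1 eqxx setU11 !andbT.
Qed.

Lemma split_0 m (F : {set 'I_m.+1} -> algC) :
  \prod_(S : {set 'I_m.+1} | Grep S) F S =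
  \prod_(S : {set 'I_m}) F (lift ord0 @: S).
Proof.
rewrite (reindex_onto (fun S : {set 'I_m} => lift ord0 @: S) (unl ord0)); last first.
  by move=> S; rewrite Grep0 => nS; rewrite lift_unl.
apply: eq_bigl => S; rewrite Grep0 unl_lift eqxx andbT.
by apply/imsetP => -[j _ /eqP]; apply/negP; exact: neq_lift.
Qed.

Lemma prod_compl m (G : {set 'I_m.+1} -> algC) :
  (forall S, G (~: S) = G S) ->
  \prod_(S : {set 'I_m.+1}) G S = (\prod_(S : {set 'I_m.+1} | Grep S) G S) ^+ 2.
Proof.
move=> GC; rewrite (bigID (fun S : {set 'I_m.+1} => ord0 \in S)) /= expr2 mulrC; congr (_ * _).
  by apply: eq_bigl => S; rewrite Grep0.
rewrite (reindex_inj (@setC_inj _)) /=; apply: eq_big => S; first by rewrite Grep0 in_setC.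
by move=> _; rewrite GC.
Qed.
Lemma memv_ord m (S : {set 'I_m}) (k : 'I_m) :
  ((val k) \in [seq val i | i in S]) = (k \in S).
Proof.
apply/mapP/idP => [[k' k'S /val_inj ->] | kS]; first by rewrite mem_enum in k'S.
by exists k; rewrite ?mem_enum.
Qed.

Lemma memv_ge m (S : {set 'I_m}) j : (m <= j)%N -> (j \in [seq val i | i in S]) = false.
Proof.
move=> mj; apply/mapP => -[k _ jk]; move: (ltn_ord k); rewrite -jk ltnNge mj.
by [].
Qed.

Lemma memv_lift m (i0 : 'I_m.+1) (S : {set 'I_m}) j :
  (bump i0 j \in [seq val i | i in lift i0 @: S]) = (j \in [seq val i | i in S]).
Proof.
case: (ltnP j m) => jm.
  have -> : bump i0 j = val (lift i0 (Ordinal jm)) by [].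
  by rewrite memv_ord (@memv_ord m S (Ordinal jm)) mem_imset //; exact: lift_inj.
rewrite !memv_ge //; rewrite /bump.
by have := ltn_ord i0; rewrite ltnS => i0m; rewrite (leq_trans i0m jm) add1n.
Qed.

Lemma memv_lift1 m (i0 : 'I_m.+1) (S : {set 'I_m}) j :
  (bump i0 j \in [seq val i | i in i0 |: lift i0 @: S]) = (j \in [seq val i | i in S]).
Proof.
case: (ltnP j m) => jm.
  have -> : bump i0 j = val (lift i0 (Ordinal jm)) by [].
  rewrite memv_ord (@memv_ord m S (Ordinal jm)) in_setU1 mem_imset; last exact: lift_inj.
  by rewrite eq_sym (negbTE (neq_lift _ _)).
rewrite !memv_ge //; rewrite /bump.
by have := ltn_ord i0; rewrite ltnS => i0m; rewrite (leq_trans i0m jm) add1n.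
Qed.

Lemma del_bump i (Y : nat -> algC) j : del i Y j = Y (bump i j).
Proof. by rewrite /del /bump; case: ltnP => h; rewrite ?add0n ?add1n. Qed.

Lemma flip_lift m (i0 : 'I_m.+1) (S : {set 'I_m}) y :
  del i0 (flip (lift i0 @: S) y) = flip S (del i0 y).
Proof.
by apply: functional_extensionality => j; rewrite !del_bump /flip memv_lift del_bump.
Qed.

Lemma flip_lift1 m (i0 : 'I_m.+1) (S : {set 'I_m}) y :
  del i0 (flip (i0 |: lift i0 @: S) y) = flip S (del i0 y).
Proof.
by apply: functional_extensionality => j; rewrite !del_bump /flip memv_lift1 del_bump.
Qed.

Lemma flip_sq m (S : {set 'I_m}) y j : flip S y j ^+ 2 = y j ^+ 2.
Proof. by rewrite /flip; case: ifP => _; rewrite ?sqrrN. Qed.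

Lemma flipC m (S : {set 'I_m}) y j : (j < m)%N -> flip (~: S) y j = negf (flip S y) j.
Proof.
move=> jm; rewrite /flip /negf.
rewrite (@memv_ord m (~: S) (Ordinal jm)) (@memv_ord m S (Ordinal jm)) in_setC.
by case: (Ordinal jm \in S); rewrite ?opprK.
Qed.

Lemma Zp_ext m x y x' y' : (forall j, (j < m)%N -> x j = x' j /\ y j = y' j) ->
  Zp m x y = Zp m x' y'.
Proof. by move=> H; apply: eq_bigr => j _; case: (H j (ltn_ord j)) => -> ->. Qed.

Lemma EC_ext m x y x' y' : (forall j, (j < m)%N -> x j = x' j /\ y j = y' j) ->
  EC m x y = EC m x' y'.
Proof.
move=> H; rewrite !EC_Zp (@Zp_ext m x y x' y' H); congr ((_ + _) / 2); apply: Zp_ext => j jm.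
by case: (H j jm) => -> yj; rewrite /negf yj.
Qed.

Lemma Zp_recr m x y : Zp m.+1 x y = Zp m x y * (x m + 'i * y m).
Proof. by rewrite /Zp big_ord_recr. Qed.

Lemma Zp_inv m x y : (forall j, y j ^+ 2 = 1 - x j ^+ 2) ->
  Zp m x y * Zp m x (negf y) = 1.
Proof.
move=> H; rewrite /Zp -big_split /=; apply: big1 => j _.
rewrite /negf; transitivity (x j ^+ 2 - 'i ^+ 2 * y j ^+ 2); first by ring.
by rewrite sqrCi H; ring.
Qed.

Lemma Zp_del m i x y : (i < m.+1)%N -> x i = 1 -> y i = 0 ->
  Zp m.+1 x y = Zp m (del i x) (del i y).
Proof.
move=> im xi yi; rewrite /Zp (bigD1_ord (Ordinal im)) //= xi yi mulr0 addr0 mul1r.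
by apply: eq_bigr => j _; rewrite !del_bump.
Qed.
Lemma inv_of (u v : algC) : u * v = 1 -> u != 0 /\ v = u^-1.
Proof.
move=> uv; have un0 : u != 0.
  by apply/eqP => u0; move: uv; rewrite u0 mul0r => /eqP; rewrite eq_sym oner_eq0.
by split=> //; apply: (mulfI un0); rewrite uv divff.
Qed.

Lemma alg_id (W W' a b : algC) : W * W' = 1 -> b ^+ 2 = 1 - a ^+ 2 ->
 ((W * (a + 'i * b) + W' * (a + 'i * (- b))) / 2 - 1) *
 ((W * (a + 'i * (- b)) + W' * (a + 'i * b)) / 2 - 1) = (a - (W + W') / 2) ^+ 2.
Proof.
move=> WW hb.
have zw : (a + 'i * b) * (a + 'i * (- b)) = 1.
  transitivity (a ^+ 2 - 'i ^+ 2 * b ^+ 2); first by ring.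
  by rewrite sqrCi hb; ring.
have ha : a = ((a + 'i * b) + (a + 'i * (- b))) / 2 by field.
rewrite [in RHS]ha.
move: zw; set z := a + 'i * b; set w := a + 'i * (- b) => zw.
case: (@inv_of z w zw) => zn0 ->; case: (@inv_of W W' WW) => Wn0 ->.
by field; rewrite zn0 Wn0.
Qed.
Lemma flip_lift_lt m (i0 : 'I_m.+1) (S : {set 'I_m}) y j : (j < i0)%N ->
  flip (lift i0 @: S) y j = flip S y j.
Proof.
move=> ji; move: (congr1 (fun f => f j) (@flip_lift m i0 S y)).
by rewrite /= {1}/del ji => ->; rewrite /flip /del ji.
Qed.

Lemma flip_lift1_lt m (i0 : 'I_m.+1) (S : {set 'I_m}) y j : (j < i0)%N ->
  flip (i0 |: lift i0 @: S) y j = flip S y j.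
Proof.
move=> ji; move: (congr1 (fun f => f j) (@flip_lift1 m i0 S y)).
by rewrite /= {1}/del ji => ->; rewrite /flip /del ji.
Qed.

Lemma flip_lift_at m (i0 : 'I_m.+1) (S : {set 'I_m}) y :
  flip (lift i0 @: S) y i0 = y i0.
Proof.
rewrite /flip memv_ord; case: ifP => //; move/imsetP => -[k _ /eqP].
by rewrite (negbTE (neq_lift _ _)).
Qed.

Lemma flip_lift1_at m (i0 : 'I_m.+1) (S : {set 'I_m}) y :
  flip (i0 |: lift i0 @: S) y i0 = - y i0.
Proof. by rewrite /flip memv_ord setU11. Qed.

Definition rel (x y : nat -> algC) := forall j, y j ^+ 2 = 1 - x j ^+ 2.

Lemma rel_flip m (S : {set 'I_m}) x y : rel x y -> rel x (flip S y).
Proof. by move=> H j; rewrite flip_sq H. Qed.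

Lemma C_P m x y : rel x y -> C m.+2 x y = P m.+2 x y ^+ 2.
Proof.
move=> H; rewrite /C /P /=.
rewrite (@split_at m.+1 ord_max (fun S => EC m.+2 x (flip S y) - 1)) //.
rewrite -prodrXl; apply: eq_bigr => S _.
rewrite !EC_Zp !(Zp_recr m.+1) /negf.
set T1 := lift ord_max @: S; set T2 := ord_max |: T1.
have eZ : forall T : {set 'I_m.+2}, (forall j, (j < m.+1)%N -> flip T y j = flip S y j) ->
    Zp m.+1 x (flip T y) = Zp m.+1 x (flip S y) /\
    Zp m.+1 x (fun j => - flip T y j) = Zp m.+1 x (fun j => - flip S y j).
  by move=> T HT; split; apply: Zp_ext => j jm; rewrite HT.
have [e1 e1'] := eZ T1 (fun j jm => @flip_lift_lt m.+1 ord_max S y j jm).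
have [e2 e2'] := eZ T2 (fun j jm => @flip_lift1_lt m.+1 ord_max S y j jm).
rewrite e1 e1' e2 e2'.
have -> : flip T1 y m.+1 = y m.+1 by exact: (@flip_lift_at m.+1 ord_max S y).
have -> : flip T2 y m.+1 = - y m.+1 by exact: (@flip_lift1_at m.+1 ord_max S y).
rewrite opprK; apply: alg_id; last exact: H.
exact: (@Zp_inv m.+1 x _ (@rel_flip m.+1 S x y H)).
Qed.
Lemma del_negf i Y : del i (negf Y) = negf (del i Y).
Proof. by apply: functional_extensionality => j; rewrite /del /negf; case: ifP. Qed.

Lemma del_set_at i v Y : del i (set_at i v Y) = del i Y.
Proof.
apply: functional_extensionality => j; rewrite !del_bump /set_at.
by rewrite eq_sym (negbTE (neq_bump _ _)).
Qed.

Lemma EC_del m i x Y : (i < m.+1)%N -> x i = 1 -> Y i = 0 ->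
  EC m.+1 x Y = EC m (del i x) (del i Y).
Proof.
move=> im xi Yi; rewrite !EC_Zp (@Zp_del m i x Y im xi Yi) (@Zp_del m i x (negf Y) im xi); last by rewrite /negf Yi oppr0.
by rewrite del_negf.
Qed.

Lemma rel_del i x y : rel x y -> rel (del i x) (del i y).
Proof. by move=> H j; rewrite !del_bump. Qed.

Lemma flip_at_zero m (S : {set 'I_m}) y i : y i = 0 -> flip S y i = 0.
Proof. by rewrite /flip => ->; case: ifP; rewrite ?oppr0. Qed.

Lemma EC_compl m x (T : {set 'I_m}) Y : EC m x (flip (~: T) Y) = EC m x (flip T Y).
Proof.
rewrite !EC_Zp addrC; congr ((_ + _) / 2); apply: Zp_ext => j jm; split => //;
  by rewrite /negf flipC // /negf ?opprK.
Qed.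

Lemma prod_neg m (F : {set 'I_m.+2} -> algC) :
  \prod_(S : {set 'I_m.+2} | Grep S) (1 - F S) = \prod_(S : {set 'I_m.+2} | Grep S) (F S - 1).
Proof.
rewrite (@split_at m.+1 ord_max (fun S => 1 - F S)) //.
rewrite (@split_at m.+1 ord_max (fun S => F S - 1)) //.
by apply: eq_bigr => S _; ring.
Qed.

Lemma flip_liftE m (i0 : 'I_m.+1) i (S : {set 'I_m}) y : val i0 = i ->
  del i (flip (lift i0 @: S) y) = flip S (del i y).
Proof. by move=> <-; exact: flip_lift. Qed.

Lemma flip_lift1E m (i0 : 'I_m.+1) i (S : {set 'I_m}) y : val i0 = i ->
  del i (flip (i0 |: lift i0 @: S) y) = flip S (del i y).
Proof. by move=> <-; exact: flip_lift1. Qed.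

Theorem mainTheorem5 (n i : nat) (x y : nat -> algC) :
  (3 <= n)%N -> (i < n)%N ->
  (forall j : nat, y j ^+ 2 = 1 - x j ^+ 2) ->
  P n (set_at i 1 x) (set_at i 0 y) = C n.-1 (del i x) (del i y) /\
  C n.-1 (del i x) (del i y) = P n.-1 (del i x) (del i y) ^+ 2.
Proof.
case: n => [|[|[|m]]] //= _ hi H.
have Hd : rel (del i x) (del i y) by exact: rel_del.
split; last exact: C_P.
have ex' : forall j, j != i -> set_at i 1 x j = x j.
  by move=> j /negbTE ji; rewrite /set_at ji.
have ey' : forall j, j != i -> set_at i 0 y j = y j.
  by move=> j /negbTE ji; rewrite /set_at ji.
case: (ltnP i m.+2) => [him | hmi]; last first.
  have ei : i = m.+2 by apply/eqP; rewrite eqn_leq hmi -ltnS hi.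
  rewrite /P /C /= -prod_neg; apply: eq_bigr => S _.
  rewrite ei /set_at eqxx; congr (_ - _); apply: EC_ext => j jm.
  rewrite /del jm (ltn_eqF jm); split => //.
  by rewrite /flip /del jm (ltn_eqF jm).

rewrite C_P // /P /=.
have -> : set_at i 1 x m.+2 = x m.+2 by apply: ex'; rewrite gtn_eqF.
have -> : del i x m.+1 = x m.+2 by rewrite /del ltnNge -ltnS him.
have EF : forall S : {set 'I_m.+2},
    EC m.+2 (set_at i 1 x) (flip S (set_at i 0 y)) =
    EC m.+1 (del i x) (del i (flip S (set_at i 0 y))).
  move=> S; rewrite (@EC_del m.+1 i _ _ him); first by rewrite del_set_at.
    by rewrite /set_at eqxx.
  by apply: flip_at_zero; rewrite /set_at eqxx.
under eq_bigr => S _ do rewrite EF.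
case: i hi H Hd ex' ey' him EF => [|i] hi H Hd ex' ey' him EF.
  rewrite (@split_0 m.+1 (fun S => x m.+2 - EC m.+1 (del 0 x) (del 0 (flip S (set_at 0 0 y))))).
  rewrite (eq_bigr (fun T : {set 'I_m.+1} => x m.+2 - EC m.+1 (del 0 x) (flip T (del 0 y)))); last first.
    by move=> T _; rewrite (@flip_liftE m.+1 ord0 0 T) // del_set_at.
  rewrite (@prod_compl m (fun T => x m.+2 - EC m.+1 (del 0 x) (flip T (del 0 y)))) //.
  by move=> T; rewrite EC_compl.
pose i0 : 'I_m.+2 := Ordinal him.
rewrite (@split_at m.+1 i0 (fun S => x m.+2 - EC m.+1 (del i.+1 x) (del i.+1 (flip S (set_at i.+1 0 y))))) //.
rewrite -prodrXl; apply: eq_bigr => S _.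
by rewrite (@flip_liftE m.+1 i0 i.+1) // (@flip_lift1E m.+1 i0 i.+1) // del_set_at expr2.
Qed.
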